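(* Let $n\ge 3$, $0<m<\frac{n-2}{n}$, $\eta>0$, $\rho>0$, and let $\alpha,\beta$ satisfy $\alpha=\frac{2\beta+\rho}{1-m}$ and $0<\alpha\le n\beta$. Let $v$ be a solution of $$\frac{n-1}{m}\left((v^m)''+\frac{n-1}{r}(v^m)'\right)+\alpha v+\beta r v'=0,\quad v>0,\quad \text{in }(0,\infty),$$ with $v(0)=\eta$, $v'(0)=0$, and let $w(r)=r^2v(r)^{1-m}$. Then there exists a constant $C_1>0$ such that $w(r)\le C_1$ for all $r\ge 1$. *)

(* Defs.v *)
From Stdlib Require Import Reals.
From Coquelicot Require Import Coquelicot.
Open Scope R_scope.

Definition radial_solution (n : nat) (m alpha beta eta : R) (v : R -> R) : Prop :=
  let u := fun r => Rpower (v r) m in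
  (forall r, 0 < r -> 0 < v r) /\
  (forall r, 0 < r -> ex_derive v r) /\
  (forall r, 0 < r -> ex_derive u r) /\
  (forall r, 0 < r -> ex_derive (Derive u) r) /\
  (forall r, 0 < r ->
     (INR n - 1) / m * (Derive (Derive u) r + (INR n - 1) / r * Derive u r)
     + alpha * v r + beta * r * Derive v r = 0) /\
  v 0 = eta /\
  filterlim (fun h => (v h - v 0) / h) (at_right 0) (locally 0).

Definition w_of (m : R) (v : R -> R) (r : R) : R := r ^ 2 * Rpower (v r) (1 - m).

(* Main.v *)
Require Import Defs.
From Stdlib Require Import Reals Lra Lia Classical.
From Coquelicot Require Import Coquelicot.
Open Scope R_scope.

Lemma dcont f x l : is_derive f x l -> continuity_pt f x.
Proof.
  intro H. apply is_derive_Reals in H.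
  apply derivable_continuous_pt. exists l. exact H.
Qed.

Lemma mono_le f df a b :
  (forall x, a < x < b -> is_derive f x (df x)) ->
  (forall x, a < x < b -> df x <= 0) ->
  forall x y, a < x -> x <= y -> y < b -> f y <= f x.
Proof.
  intros Hd Hs x y Hx Hxy Hy.
  destruct (Req_dec x y) as [<-|Hne]; [lra|].
  destruct (MVT_gen f x y df) as [c [Hc He]].
  - intros z Hz. rewrite Rmin_left in Hz by lra. rewrite Rmax_right in Hz by lra.
    apply Hd; lra.
  - intros z Hz. rewrite Rmin_left in Hz by lra. rewrite Rmax_right in Hz by lra.
    apply (dcont _ _ (df z)), Hd; lra.
  - rewrite Rmin_left in Hc by lra. rewrite Rmax_right in Hc by lra.
    assert (df c <= 0) by (apply Hs; lra).
    assert (df c * (y - x) <= 0) by (apply Rmult_le_0_r; lra). lra.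
Qed.

Lemma min_pos a b : 0 < a -> 0 < b -> exists c, 0 < c /\ c <= a /\ c <= b.
Proof. intros. exists (Rmin a b). split; [apply Rmin_pos; lra|split; [apply Rmin_l|apply Rmin_r]]. Qed.

Lemma cont_left g s : continuity_pt g s -> 0 < s ->
  (forall t, 0 < t < s -> 0 < g t) -> 0 <= g s.
Proof.
  intros Hc Hs Hp. destruct (Rle_lt_dec 0 (g s)) as [h|h]; [exact h|].
  exfalso.
  unfold continuity_pt, continue_in, limit1_in, limit_in in Hc.
  destruct (Hc (- g s)) as [al [Hal Hx]]; [lra|].
  destruct (min_pos (s/2) (al/2)) as [c [Hc1 [Hc2 Hc3]]]; try lra.
  set (t := s - c).
  assert (0 < t < s) by (unfold t; lra).
  assert (Hd : R_dist (g t) (g s) < - g s).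
  { apply Hx. split. split; [constructor|unfold t; lra]. simpl; unfold R_dist.
    rewrite Rabs_left by (unfold t; lra). unfold t. lra. }
  simpl in Hd. unfold R_dist in Hd. specialize (Hp t H).
  apply Rabs_def2 in Hd. lra.
Qed.

Lemma cont_right_pos g s : continuity_pt g s -> 0 < g s ->
  exists e, 0 < e /\ forall t, s <= t < s + e -> 0 < g t.
Proof.
  intros Hc Hg.
  unfold continuity_pt, continue_in, limit1_in, limit_in in Hc.
  destruct (Hc (g s)) as [al [Hal Hx]]; [lra|].
  exists al; split; [lra|]. intros t Ht.
  destruct (Req_dec t s) as [->|hn]; [lra|].
  assert (Hd : R_dist (g t) (g s) < g s).
  { apply Hx. split. split; [constructor|lra]. simpl. unfold R_dist. rewrite Rabs_right by lra. lra. }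
  simpl in Hd. unfold R_dist in Hd. apply Rabs_def2 in Hd. lra.
Qed.

Lemma neg_aux (y h : R) : h < 0 -> y / h > 0 -> y < 0.
Proof. intros Hh Hy. assert (y = (y/h)*h) by (field; lra). rewrite H. nra. Qed.

Lemma deriv_contra (g : R -> R) (s d : R) : is_derive g s d -> 0 < d -> 0 < s -> g s = 0 ->
  (forall t, 0 < t < s -> 0 < g t) -> False.
Proof.
  intros Hd Hdp Hs Hgs Hp. apply is_derive_Reals in Hd.
  destruct (Hd (d/2)) as [de Hde]; [lra|].
  destruct de as [de Hdep]; simpl in Hde.
  destruct (min_pos (de/2) (s/2)) as [c [Hc1 [Hc2 Hc3]]]; try lra.
  set (h := - c).
  assert (Hh1 : h < 0) by (unfold h; lra).
  assert (Hh2 : Rabs h < de) by (rewrite Rabs_left by lra; unfold h; lra).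
  assert (Hh3 : 0 < s + h) by (unfold h; lra).
  specialize (Hde h (Rlt_not_eq _ _ Hh1) Hh2). rewrite Hgs in Hde.
  apply Rabs_def2 in Hde.
  assert (Hq : (g (s+h) - 0)/h > d/2) by lra.
  assert (g (s+h) < 0).
  { assert (g (s+h) - 0 < 0) by (apply (neg_aux (g (s+h) - 0) h); lra). lra. }
  specialize (Hp (s+h)). lra.
Qed.

Lemma barrier (g1 g2 : R -> R) tau :
  0 < tau ->
  (forall r, 0 < r -> continuity_pt g1 r) ->
  (forall r, 0 < r -> continuity_pt g2 r) ->
  (forall r, 0 < r < tau -> 0 < g1 r /\ 0 < g2 r) ->
  (forall r, 0 < r -> g1 r = 0 -> 0 <= g2 r -> exists d, 0 < d /\ is_derive g1 r d) ->
  (forall r, 0 < r -> g2 r = 0 -> 0 <= g1 r -> exists d, 0 < d /\ is_derive g2 r d) ->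
  forall r, 0 < r -> 0 < g1 r /\ 0 < g2 r.
Proof.
  intros Ht C1 C2 Hi D1 D2 r0 Hr0.
  destruct (Rlt_dec 0 (g1 r0)) as [a1|a1]; destruct (Rlt_dec 0 (g2 r0)) as [a2|a2];
    try (split; assumption); exfalso.
  all: assert (Hr0t : tau <= r0) by (destruct (Rle_lt_dec tau r0) as [h|h]; [exact h|
         destruct (Hi r0); lra]).
  all: set (E := fun x => 0 < x <= r0 /\ forall t, 0 < t <= x -> 0 < g1 t /\ 0 < g2 t).
  all: assert (HE : E (tau/2)) by (split; [lra| intros t Ht'; apply Hi; lra]).
  all: assert (Hb : bound E) by (exists r0; intros x [Hx _]; lra).
  all: destruct (completeness E Hb (ex_intro _ _ HE)) as [s [Hub Hlub]].
  all: assert (Hs1 : tau/2 <= s) by (apply Hub; exact HE).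
  all: assert (Hs2 : s <= r0) by (apply Hlub; intros x [Hx _]; lra).
  all: assert (HA : forall t, 0 < t < s -> 0 < g1 t /\ 0 < g2 t) by (
    intros t Ht';
    destruct (Rlt_dec 0 (g1 t)) as [b1|b1]; destruct (Rlt_dec 0 (g2 t)) as [b2|b2];
    try (split; assumption); exfalso;
    assert (s <= t) by (apply Hlub; intros x [Hx1 Hx2];
       destruct (Rle_lt_dec x t) as [h|h]; [exact h| destruct (Hx2 t); lra]); lra).
  all: assert (P1 : 0 <= g1 s) by (apply cont_left; [apply C1; lra| lra | intros; apply HA; auto]).
  all: assert (P2 : 0 <= g2 s) by (apply cont_left; [apply C2; lra| lra | intros; apply HA; auto]).
  all: destruct (Rle_lt_or_eq_dec _ _ P1) as [Q1|Q1];
       [destruct (Rle_lt_or_eq_dec _ _ P2) as [Q2|Q2]|].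
  all: try (destruct (D1 s) as [d [Hd Hdd]]; [lra|auto|auto|];
            apply (deriv_contra g1 s d Hdd Hd); [lra|auto|intros; apply HA; auto]).
  all: try (destruct (D2 s) as [d [Hd Hdd]]; [lra|auto|auto|];
            apply (deriv_contra g2 s d Hdd Hd); [lra|auto|intros; apply HA; auto]).
  all: destruct (cont_right_pos g1 s) as [e1 [He1 R1]]; [apply C1; lra|auto|].
  all: destruct (cont_right_pos g2 s) as [e2 [He2 R2]]; [apply C2; lra|auto|].
  all: destruct (Req_dec s r0) as [Hsr|Hsr]; [subst s; tauto|].
  all: destruct (min_pos e1 e2) as [e [He [Hee1 Hee2]]]; auto.
  all: destruct (min_pos (e/2) (r0 - s)) as [c [Hc [Hc1 Hc2]]]; try lra.
  all: assert (HEx : E (s + c)) by (split; [lra| intros t Ht';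
        destruct (Rlt_le_dec t s) as [h|h]; [apply HA; lra| split; [apply R1|apply R2]; lra]]).
  all: specialize (Hub _ HEx); lra.
Qed.

Lemma pow_le1 x k : 0 <= x <= 1 -> x ^ k <= 1.
Proof. intros H. induction k; simpl; [lra|]. pose proof (pow_le x k (proj1 H)). nra. Qed.

Lemma pow_le_self x k : 0 <= x <= 1 -> x ^ (S k) <= x.
Proof. intros H. simpl. pose proof (pow_le1 x k H). pose proof (pow_le x k (proj1 H)). nra. Qed.

Lemma Rpower_pos x a : 0 < Rpower x a.
Proof. unfold Rpower. apply exp_pos. Qed.

Lemma is_derive_eq (f : R -> R) x l l' : is_derive f x l -> l = l' -> is_derive f x l'.
Proof. intros H ->; exact H. Qed.

Lemma rpow_comp (v : R -> R) a x dv : 0 < v x -> is_derive v x dv ->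
  is_derive (fun y => Rpower (v y) a) x (a * Rpower (v x) (a - 1) * dv).
Proof.
  intros Hp Hd.
  assert (Hf : is_derive (fun y => Rpower y a) (v x) (a * Rpower (v x) (a - 1))).
  { apply is_derive_Reals. apply derivable_pt_lim_power. exact Hp. }
  pose proof (is_derive_comp (fun y => Rpower y a) v x _ _ Hf Hd) as H.
  eapply is_derive_eq; [exact H|]. unfold scal; simpl; unfold mult; simpl. ring.
Qed.

Lemma div_bound y h : 0 < h -> Rabs (y / h) < 1 -> Rabs y < h.
Proof.
  intros Hh H. replace y with (y / h * h) by (field; lra).
  rewrite Rabs_mult, (Rabs_right h) by lra. nra.
Qed.

Lemma choose_s a b c : 0 < a -> 0 < b -> 2*b < a*c -> exists s, a*s > 2 /\ b*s < c.
Proof.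
  intros Ha Hb H. exists ((2/a + c/b)/2). split.
  - assert (E : a*((2/a + c/b)/2) - 2 = (a*c - 2*b)/(2*b)) by (field; lra).
    assert (0 < (a*c - 2*b)/(2*b)) by (apply Rdiv_lt_0_compat; lra). lra.
  - assert (E : c - b*((2/a + c/b)/2) = (a*c - 2*b)/(2*a)) by (field; lra).
    assert (0 < (a*c - 2*b)/(2*a)) by (apply Rdiv_lt_0_compat; lra). lra.
Qed.

Lemma liminf_aux (k : nat) (u D1 : R -> R) (c0 : R) :
  0 < c0 ->
  (forall x, 0 < x -> 0 < u x) ->
  (forall x, 0 < x -> is_derive u x (D1 x)) ->
  forall r c, 0 < r -> 0 < c -> exists t, 0 < t < r /\ c0 * t ^ (S (S k)) * D1 t < c.
Proof.
  intros Hc0 Hu HD r c Hr Hc.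
  destruct (Classical_Prop.classic (exists t, 0 < t < r /\ c0 * t ^ (S (S k)) * D1 t < c)) as [h|h];
    [exact h|exfalso].
  assert (Hge : forall t, 0 < t < r -> c <= c0 * t ^ (S (S k)) * D1 t).
  { intros t Ht. destruct (Rle_lt_dec c (c0 * t ^ (S (S k)) * D1 t)) as [h'|h']; auto.
    exfalso; apply h; exists t; auto. }
  set (K := c / (c0 * INR (S k))).
  assert (HK : 0 < K) by (unfold K; apply Rdiv_lt_0_compat; auto; apply Rmult_lt_0_compat; auto; apply lt_0_INR; lia).
  set (h1 := fun x => - (u x + K / x ^ (S k))).
  assert (Hd : forall x, 0 < x < r -> is_derive h1 x (- (D1 x - c / (c0 * x ^ (S (S k)))))).
  { intros x Hx. unfold h1.
    assert (Hx0 : x ^ (S k) <> 0) by (apply pow_nonzero; lra).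
    refine (is_derive_opp (fun y => u y + K / y ^ S k) x _ _).
    refine (is_derive_plus u (fun y => K / y ^ S k) x _ _ _ _); [apply HD; lra|].
    auto_derive; [auto|]. unfold K.
    change (match k with 0%nat => 1 | S _ => INR k + 1 end) with (INR (S k)).
    change (x ^ S (S k)) with (x * (x * x ^ k)).
    assert (INR (S k) <> 0) by (apply not_0_INR; lia).
    assert (x ^ k <> 0) by (apply pow_nonzero; lra).
    field. repeat split; lra. }
  assert (Hs : forall x, 0 < x < r -> - (D1 x - c / (c0 * x ^ (S (S k)))) <= 0).
  { intros x Hx. pose proof (Hge x Hx).
    assert (Hp : 0 < c0 * x ^ (S (S k))) by (apply Rmult_lt_0_compat; auto; apply pow_lt; lra).
    assert (c / (c0 * x ^ (S (S k))) <= D1 x).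
    { apply (Rmult_le_reg_r (c0 * x ^ (S (S k)))); auto.
      replace (c / (c0 * x ^ (S (S k))) * (c0 * x ^ (S (S k)))) with c by (field; repeat split; try lra; apply pow_nonzero; lra).
      replace (D1 x * (c0 * x ^ S (S k))) with (c0 * x^ S(S k) * D1 x) by ring. lra. }
    lra. }
  set (H := u (Rmin (r/2) 1) + K / (Rmin (r/2) 1) ^ (S k)).
  assert (Hm : 0 < Rmin (r/2) 1) by (apply Rmin_pos; lra).
  destruct (min_pos (Rmin (r/2) 1) (K / (Rabs H + 1))) as [t [Ht [Ht1 Ht2]]]; auto.
  { apply Rdiv_lt_0_compat; auto. pose proof (Rabs_pos H); lra. }
  pose proof (Rmin_l (r/2) 1). pose proof (Rmin_r (r/2) 1).
  pose proof (mono_le h1 _ 0 r Hd Hs t (Rmin (r/2) 1) Ht Ht1 ltac:(lra)) as Hmono.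
  unfold h1 in Hmono. fold H in Hmono.
  pose proof (Hu t Ht).
  assert (Htk : t ^ (S k) <= t) by (apply pow_le_self; lra).
  assert (Htk0 : 0 < t ^ (S k)) by (apply pow_lt; lra).
  assert (K / t <= K / t ^ (S k)).
  { apply Rmult_le_compat_l; [lra|]. apply Rinv_le_contravar; lra. }
  assert (Rabs H + 1 <= K / t).
  { apply (Rmult_le_reg_r t); auto. replace (K / t * t) with K by (field; lra).
    apply (Rmult_le_compat_r (Rabs H + 1)) in Ht2; [|pose proof (Rabs_pos H); lra].
    replace (K / (Rabs H + 1) * (Rabs H + 1)) with K in Ht2 by (field; pose proof (Rabs_pos H); lra).
    lra. }
  pose proof (Rle_abs H). lra.
Qed.

Lemma dv_bound x v p q dv D1 N m de beta Pn :
  0 < x -> 0 < v -> 0 < q -> 0 < Pn -> 0 < m -> 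
  p * q = 1 -> D1 = m * p * dv ->
  0 <= (beta - de) * (x * Pn) * v - ((N - 1) / m * Pn * D1 + beta * (x * Pn) * v) ->
  (N - 1) * dv <= - de * x * v * q.
Proof.
  intros Hx Hv Hq HP Hm Hpq HD H.
  assert (E : (beta - de) * (x * Pn) * v - ((N - 1) / m * Pn * D1 + beta * (x * Pn) * v)
     = Pn * (- de * x * v - (N - 1) * p * dv)) by (rewrite HD; field; lra).
  rewrite E in H.
  assert (H1 : 0 <= - de * x * v - (N - 1) * p * dv).
  { destruct (Rle_lt_dec 0 (- de * x * v - (N - 1) * p * dv)); auto. nra. }
  assert (H2 : 0 <= q * (- de * x * v - (N - 1) * p * dv)) by nra.
  replace (q * (- de * x * v - (N - 1) * p * dv)) with (- de * x * v * q - (N - 1) * dv * (p * q)) in H2 by ring.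
  rewrite Hpq in H2. lra.
Qed.

Lemma dv_eq x v p q dv D1 N m de beta Pn :
  0 < x -> 0 < v -> 0 < q -> 0 < Pn -> 0 < m -> 
  p * q = 1 -> D1 = m * p * dv ->
  (beta - de) * (x * Pn) * v - ((N - 1) / m * Pn * D1 + beta * (x * Pn) * v) = 0 ->
  (N - 1) * dv = - de * x * v * q.
Proof.
  intros Hx Hv Hq HP Hm Hpq HD H.
  assert (E : (beta - de) * (x * Pn) * v - ((N - 1) / m * Pn * D1 + beta * (x * Pn) * v)
     = Pn * (- de * x * v - (N - 1) * p * dv)) by (rewrite HD; field; lra).
  rewrite E in H.
  assert (H1 : - de * x * v - (N - 1) * p * dv = 0).
  { apply Rmult_integral in H. destruct H; lra. }
  assert (H2 : q * (- de * x * v - (N - 1) * p * dv) = 0) by (rewrite H1; ring).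
  replace (q * (- de * x * v - (N - 1) * p * dv)) with (- de * x * v * q - (N - 1) * dv * (p * q)) in H2 by ring.
  rewrite Hpq in H2. lra.
Qed.

Lemma alg1 x v q z dv N m de W s :
  0 < x -> 0 < v -> 0 < q -> 0 < z -> 1 < N - 1 -> m < 1 -> 0 < de ->
  q = v * z ->
  (N - 1) * dv <= - de * x * v * q ->
  x * x * q = W -> de * W = (N - 1) * s -> (1 - m) * s > 2 ->
  0 < - (2 * x * q + x * x * ((1 - m) * z * dv)).
Proof.
  intros Hx Hv Hq Hz HN Hm Hde Hqz Hd Hw HW Hs.
  assert (Hc : 0 < x * x * (1 - m) * z) by (repeat apply Rmult_lt_0_compat; lra).
  assert (H1 : x * x * (1 - m) * z * ((N - 1) * dv) <= x * x * (1 - m) * z * (- de * x * v * q))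
    by (apply Rmult_le_compat_l; lra).
  replace (x * x * (1 - m) * z * (- de * x * v * q)) with (- x * q * (1 - m) * (de * (x * x * (v * z)))) in H1 by ring.
  rewrite <- Hqz, Hw, HW in H1.
  assert (H2 : (N - 1) * (2 * x * q + x * x * ((1 - m) * z * dv)) <= x * q * (N - 1) * (2 - (1 - m) * s))
    by nra.
  assert (H3 : x * q * (N - 1) * (2 - (1 - m) * s) < 0).
  { assert (0 < x * q * (N - 1)) by (repeat apply Rmult_lt_0_compat; lra). nra. }
  nra.
Qed.

Lemma alg2 x v q dv N de W s beta alpha th Pn :
  0 < x -> 0 < v -> 0 < q -> 1 < N - 1 -> 0 < de -> 0 < beta - de -> 0 < Pn ->
  (N - 1) * dv = - de * x * v * q ->
  x * x * q <= W -> de * W = (N - 1) * s -> (beta - de) * s < alpha - de * N ->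
  th = N * beta - alpha ->
  0 < (beta - de) * (N * Pn * v + x * Pn * dv) - th * Pn * v.
Proof.
  intros Hx Hv Hq HN Hde Hbd HP Hd Hw HW Hs Hth.
  assert (E : (N - 1) * ((beta - de) * (N * Pn * v + x * Pn * dv) - th * Pn * v)
     = Pn * ((N - 1) * v * (alpha - de * N) - (beta - de) * v * (de * (x * x * q)))).
  { replace (x * Pn * dv) with (Pn * x * dv) by ring.
    transitivity (Pn * ((beta - de) * (N * (N - 1) * v + x * ((N - 1) * dv)) - th * (N - 1) * v)); [ring|].
    rewrite Hd, Hth. ring. }
  assert (H1 : (beta - de) * v * (de * (x * x * q)) <= (beta - de) * v * (de * W)).
  { apply Rmult_le_compat_l; [nra|]. apply Rmult_le_compat_l; lra. }
  rewrite HW in H1.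
  assert (H2 : 0 < (N - 1) * v * (alpha - de * N) - (beta - de) * v * ((N - 1) * s)).
  { replace ((N - 1) * v * (alpha - de * N) - (beta - de) * v * ((N - 1) * s)) with
      ((N - 1) * v * (alpha - de * N - (beta - de) * s)) by ring.
    repeat apply Rmult_lt_0_compat; lra. }
  assert (H3 : 0 < (N - 1) * ((beta - de) * (N * Pn * v + x * Pn * dv) - th * Pn * v)).
  { rewrite E. apply Rmult_lt_0_compat; lra. }
  destruct (Rle_lt_dec ((beta - de) * (N * Pn * v + x * Pn * dv) - th * Pn * v) 0); auto. nra.
Qed.

Lemma lim_extract (v : R -> R) : filterlim (fun h => (v h - v 0)/h) (at_right 0) (locally 0) ->
  exists t0, 0 < t0 /\ forall h, 0 < h < t0 -> Rabs ((v h - v 0)/h) < 1.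
Proof.
intros Hlim.
apply (proj1 (filterlim_locally _ _)) with (eps := mkposreal 1 Rlt_0_1) in Hlim.
destruct Hlim as [e He]. exists e. split; [apply cond_pos|]. intros h Hh.
assert (Hb : ball 0 e h).
{ unfold ball; simpl; unfold AbsRing_ball, abs, minus, plus, opp; simpl. rewrite Ropp_0, Rplus_0_r, Rabs_right by lra. lra. }
specialize (He h Hb ltac:(lra)). 
unfold ball in He; simpl in He; unfold AbsRing_ball, abs, minus, plus, opp in He; simpl in He.
rewrite Ropp_0, Rplus_0_r in He. exact He.
Qed.
Theorem lemma2p6 (n : nat) (m eta rho alpha beta : R) (v : R -> R) :
  (3 <= n)%nat ->
  0 < m -> m < (INR n - 2) / INR n ->
  0 < eta -> 0 < rho ->
  alpha = (2 * beta + rho) / (1 - m) ->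
  0 < alpha -> alpha <= INR n * beta ->
  radial_solution n m alpha beta eta v ->
  exists C1 : R, 0 < C1 /\ forall r : R, 1 <= r -> w_of m v r <= C1.
Proof.
  intros Hn Hm Hmn Heta Hrho Hal Hapos Halb Hsol.
  unfold radial_solution in Hsol; cbv zeta in Hsol.
  destruct Hsol as [Hpos [Hdv [Hdu [Hddu [Hode [Hv0 Hlim]]]]]].
  set (u := fun r => Rpower (v r) m) in *.
  destruct n as [|[|[|k]]]; try lia. clear Hn.
  set (N := INR (S (S (S k)))) in *.
  assert (HN : 3 <= N) by (unfold N; rewrite !S_INR; pose proof (pos_INR k); lra).
  assert (HmN : m * N < N - 2).
  { apply (Rmult_lt_compat_r N) in Hmn; [|lra].
    replace ((N - 2) / N * N) with (N - 2) in Hmn by (field; lra). exact Hmn. }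
  assert (Hm1 : m < 1) by nra.
  assert (Hb : 0 < beta) by nra.
  assert (Ham : alpha * (1 - m) = 2 * beta + rho) by (rewrite Hal; field; lra).
  set (a := (1 - m) * N - 2).
  assert (Ha : 0 < a) by (unfold a; nra).
  destruct (min_pos (beta/2) (alpha/(2*N))) as [d0 [Hd0 [Hd01 Hd02]]].
  { lra. } { apply Rdiv_lt_0_compat; lra. }
  destruct (min_pos d0 (rho/(2*a))) as [de [Hde [Hde1 Hde2]]]; auto.
  { apply Rdiv_lt_0_compat; lra. }
  assert (HdeN : de * N <= alpha / 2).
  { apply (Rmult_le_compat_r N) in Hd02; [|lra].
    replace (alpha / (2*N) * N) with (alpha/2) in Hd02 by (field; lra). nra. }
  assert (Hdea : de * a <= rho / 2).
  { apply (Rmult_le_compat_r a) in Hde2; [|lra].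
    replace (rho / (2*a) * a) with (rho/2) in Hde2 by (field; lra). lra. }
  assert (Hkey : 2 * (beta - de) < (1 - m) * (alpha - de * N)).
  { assert (E : (1 - m) * (alpha - de * N) = alpha * (1 - m) - de * a - 2 * de) by (unfold a; ring).
    rewrite E, Ham. lra. }
  destruct (choose_s (1 - m) (beta - de) (alpha - de * N)) as [s [Hs1 Hs2]]; try lra.
  set (W := (N - 1) * s / de).
  assert (Hspos : 0 < s) by nra.
  assert (HW : 0 < W) by (unfold W; apply Rdiv_lt_0_compat; nra).
  assert (HWde : de * W = (N - 1) * s) by (unfold W; field; lra).
  assert (HDv : forall x, 0 < x -> is_derive v x (Derive v x)) by (intros; apply Derive_correct; auto).
  assert (HD1 : forall x, 0 < x -> Derive u x = m * Rpower (v x) (m - 1) * Derive v x).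
  { intros x Hx. apply is_derive_unique. unfold u. apply rpow_comp; auto. }
  assert (Hupos : forall x, 0 < x -> 0 < u x) by (intros; unfold u; apply Rpower_pos).
  clearbody u.
  assert (HDu : forall x, 0 < x -> is_derive u x (Derive u x)) by (intros; apply Derive_correct; auto).
  assert (HDDu : forall x, 0 < x -> is_derive (Derive u) x (Derive (Derive u) x)) by (intros; apply Derive_correct; auto).
  set (th := N * beta - alpha).
  assert (Hth : 0 <= th) by (unfold th; lra).
  set (F := fun x => (N - 1) / m * x ^ (S (S k)) * Derive u x + beta * x ^ (S (S (S k))) * v x).
  assert (HF : forall x, 0 < x -> is_derive F x (th * x ^ (S (S k)) * v x)).
  { intros x Hx. unfold F. auto_derive. { repeat split; auto. }
    change (match k with 0%nat => 1 | S _ => INR k + 1 end) with (INR (S k)).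
    change (Derive (fun x0 => Derive u x0) x) with (Derive (Derive u) x).
    change (Derive (fun x0 => v x0) x) with (Derive v x).
    assert (HN' : N = INR (S k) + 2) by (unfold N; rewrite !S_INR; ring).
    pose proof (Hode x Hx) as Ho.
    unfold th. change (x ^ S (S k)) with (x * (x * x ^ k)).
    apply Rminus_diag_uniq.
    transitivity (x * (x * x^k) * ((N - 1) / m * (Derive (Derive u) x + (N - 1) / x * Derive u x) + alpha * v x + beta * x * Derive v x)).
    - rewrite HN'. field. lra.
    - rewrite Ho. ring. }
  assert (HN' : N = INR (S k) + 2) by (unfold N; rewrite !S_INR; ring).
  assert (Hpq : forall x, 0 < x -> Rpower (v x) (m-1) * Rpower (v x) (1-m) = 1).
  { intros. rewrite <- Rpower_plus. replace (m - 1 + (1 - m)) with 0 by ring. apply Rpower_O; auto. }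
  assert (Hqz : forall x, 0 < x -> Rpower (v x) (1-m) = v x * Rpower (v x) (-m)).
  { intros. replace (1 - m) with (1 + -m) by ring. rewrite Rpower_plus, Rpower_1; auto. }
  assert (Hw : forall x, 0 < x -> is_derive (w_of m v) x (2*x*Rpower (v x)(1-m) + x*x*((1-m)*Rpower (v x)(-m) * Derive v x))).
  { intros x Hx. unfold w_of.
    pose proof (rpow_comp v (1-m) x (Derive v x) (Hpos x Hx) (HDv x Hx)) as H1.
    assert (H2 : is_derive (fun y : R => y^2) x (2*x)) by (auto_derive; auto; ring).
    pose proof (is_derive_mult (fun y => y^2) (fun y => Rpower (v y)(1-m)) x _ _ H2 H1 ltac:(intros; apply Rmult_comm)) as H.
    eapply is_derive_eq; [exact H|]. unfold mult, plus; simpl. replace (1 - m - 1) with (-m) by ring. ring. }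
  set (g1 := fun x => W - w_of m v x).
  set (g2 := fun x => (beta - de) * x ^ (S (S (S k))) * v x - F x).
  assert (Hg1 : forall x, 0 < x -> is_derive g1 x (- (2*x*Rpower (v x)(1-m) + x*x*((1-m)*Rpower (v x)(-m) * Derive v x)))).
  { intros x Hx. unfold g1. eapply is_derive_eq.
    - refine (is_derive_minus (fun _ => W) (w_of m v) x _ _ _ (Hw x Hx)). apply is_derive_const.
    - unfold minus, plus, opp; simpl. unfold zero; simpl. ring. }
  assert (Hg2 : forall x, 0 < x -> is_derive g2 x ((beta - de) * (N * x^(S(S k)) * v x + x^(S(S(S k))) * Derive v x) - th * x^(S(S k)) * v x)).
  { intros x Hx.
    assert (Hp : is_derive (fun y => (beta - de) * y ^ (S (S (S k))) * v y) x ((beta - de) * (N * x^(S(S k)) * v x + x^(S(S(S k))) * Derive v x))).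
    { auto_derive; [auto|]. 
      change (match k with 0%nat => 1 | S _ => INR k + 1 end) with (INR (S k)).
      rewrite HN'. simpl. change (Derive (fun x0 => v x0) x) with (Derive v x). ring. }
    unfold g2. eapply is_derive_eq.
    - refine (is_derive_minus _ F x _ _ Hp (HF x Hx)).
    - unfold minus, plus, opp; simpl. ring. }
  assert (HN1 : 1 < N - 1) by lra.
  assert (Hbd : 0 < beta - de) by lra.
  destruct (lim_extract v Hlim) as [t0 [Ht0 Ht0b]].
  assert (Hvc : forall h, 0 < h < t0 -> Rabs (v h - eta) < h).
  { intros h Hh. apply div_bound; [lra|]. rewrite <- Hv0. apply Ht0b; auto. }
  destruct (min_pos (eta/2) (eta*alpha/(8*N*beta))) as [ep [Hep [Hep1 Hep2]]]; try lra.
  { apply Rdiv_lt_0_compat; [nra|]. nra. }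
  set (K := Rpower (2*eta) (1-m)).
  assert (HK : 0 < K) by apply Rpower_pos.
  destruct (min_pos t0 ep) as [t1 [Ht1 [Ht11 Ht12]]]; auto.
  destruct (min_pos t1 1) as [t2 [Ht2 [Ht21 Ht22]]]; auto; try lra.
  destruct (min_pos t2 (W/(K+1))) as [tau [Htau [Htau1 Htau2]]]; auto.
  { apply Rdiv_lt_0_compat; lra. }
  assert (Hvn : forall x, 0 < x < tau -> eta - ep < v x < eta + ep).
  { intros x Hx. pose proof (Hvc x ltac:(lra)) as H. apply Rabs_def2 in H. lra. }
  assert (Hinit1 : forall x, 0 < x < tau -> 0 < g1 x).
  { intros x Hx. unfold g1, w_of. pose proof (Hvn x Hx).
    assert (HR : Rpower (v x) (1 - m) <= K) by (apply Rle_Rpower_l; lra).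
    assert (Hx2 : x ^ 2 <= x) by (simpl; nra).
    assert (x * K < W).
    { assert (Hxl : x < W / (K + 1)) by lra. apply (Rmult_lt_compat_r K) in Hxl; auto. 
      assert (W / (K + 1) * K < W).
      { replace (W / (K + 1) * K) with (W * (K / (K + 1))) by (field; lra).
        assert (K / (K + 1) < 1) by (apply (Rmult_lt_reg_r (K+1)); [lra|]; replace (K / (K+1) * (K+1)) with K by (field; lra); lra).
        nra. }
      nra. }
    assert (0 < Rpower (v x) (1 - m)) by apply Rpower_pos.
    assert (0 <= x ^ 2) by (apply pow_le; lra).
    nra. }
  set (M := th * (eta + ep) / N).
  assert (HM : 0 <= M) by (unfold M; apply Rmult_le_pos; [apply Rmult_le_pos; lra| left; apply Rinv_0_lt_compat; lra]).
  assert (Harith : th * (eta + ep) < N * ((beta - de) * (eta - ep))).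
  { assert (E : N * ((beta - de) * (eta - ep)) - th * (eta + ep)
        = -2 * (N * beta * ep) - (de * N) * eta + (de * N) * ep + alpha * eta + alpha * ep) by (unfold th; ring).
    assert (F1 : (de * N) * eta <= alpha / 2 * eta) by (apply Rmult_le_compat_r; lra).
    assert (F2 : 0 <= (de * N) * ep) by (apply Rmult_le_pos; nra).
    assert (F3 : 0 <= alpha * ep) by nra.
    assert (F4 : N * beta * ep * 8 <= eta * alpha).
    { apply (Rmult_le_compat_r (8 * N * beta)) in Hep2; [|nra].
      replace (eta * alpha / (8 * N * beta) * (8 * N * beta)) with (eta * alpha) in Hep2 by (field; lra).
      lra. }
    assert (F5 : 0 < alpha * eta) by nra.
    lra. }
  assert (Hinit2 : forall x, 0 < x < tau -> 0 < g2 x).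
  { intros x Hx.
    assert (Hstep : forall c, 0 < c -> F x < M * x ^ (S (S (S k))) + c).
    { intros c Hc.
      destruct (min_pos x (c / (4 * beta * eta))) as [r' [Hr' [Hr'1 Hr'2]]]; try lra.
      { apply Rdiv_lt_0_compat; nra. }
      destruct (liminf_aux k u (Derive u) ((N - 1) / m) ltac:(apply Rdiv_lt_0_compat; lra) Hupos HDu r' (c/2) Hr' ltac:(lra))
        as [t [Ht Htc]].
      assert (HFt : F t < c).
      { unfold F. pose proof (Hvn t ltac:(lra)).
        assert (t ^ (S (S (S k))) <= t) by (apply pow_le_self; lra).
        assert (0 <= t ^ (S (S (S k)))) by (apply pow_le; lra).
        assert (beta * t ^ (S (S (S k))) * v t <= beta * t * (2 * eta)).
        { rewrite !Rmult_assoc. apply Rmult_le_compat_l; [lra|]. 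
          apply Rmult_le_compat; lra. }
        assert (beta * t * (2 * eta) < c / 2).
        { assert (Hr'3 : t < c / (4 * beta * eta)) by lra.
          apply (Rmult_lt_compat_r (4 * beta * eta)) in Hr'3; [|nra].
          replace (c / (4 * beta * eta) * (4 * beta * eta)) with c in Hr'3 by (field; lra).
          nra. }
        lra. }
      set (G := fun y => F y - M * y ^ (S (S (S k)))).
      assert (HG : forall y, 0 < y < tau -> is_derive G y (th * y ^ (S (S k)) * v y - M * (N * y ^ (S (S k))))).
      { intros y Hy. unfold G. eapply is_derive_eq.
        - refine (is_derive_minus F (fun y => M * y ^ (S (S (S k)))) y _ _ (HF y ltac:(lra)) _).
          apply is_derive_scal. 
          pose proof (is_derive_pow (fun y => y) (S (S (S k))) y 1 (is_derive_id y)) as Hp.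
          exact Hp.
        - unfold minus, plus, opp. rewrite HN'. simpl. ring. }
      assert (HGs : forall y, 0 < y < tau -> th * y ^ (S (S k)) * v y - M * (N * y ^ (S (S k))) <= 0).
      { intros y Hy. pose proof (Hvn y Hy).
        assert (0 < y ^ (S (S k))) by (apply pow_lt; lra).
        replace (M * (N * y ^ (S (S k)))) with (th * (eta + ep) * y ^ (S (S k))) by (unfold M; field; lra).
        assert (th * v y <= th * (eta + ep)) by (apply Rmult_le_compat_l; lra).
        nra. }
      pose proof (mono_le G _ 0 tau HG HGs t x ltac:(lra) ltac:(lra) ltac:(lra)) as Hm'.
      unfold G in Hm'.
      assert (0 <= M * t ^ (S (S (S k)))) by (apply Rmult_le_pos; auto; apply pow_le; lra).
      lra. }
    assert (HFx : F x <= M * x ^ (S (S (S k)))).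
    { destruct (Rle_lt_dec (F x) (M * x ^ (S (S (S k))))) as [h|h]; auto.
      specialize (Hstep (F x - M * x ^ (S (S (S k)))) ltac:(lra)). lra. }
    unfold g2. pose proof (Hvn x Hx).
    assert (Hx3 : 0 < x ^ (S (S (S k)))) by (apply pow_lt; lra).
    assert (M < (beta - de) * (eta - ep)).
    { unfold M. apply (Rmult_lt_reg_r N); [lra|]. replace (th * (eta + ep) / N * N) with (th * (eta + ep)) by (field; lra). lra. }
    assert ((beta - de) * (eta - ep) <= (beta - de) * v x) by (apply Rmult_le_compat_l; lra).
    nra. }
  assert (Hbar := barrier g1 g2 tau Htau
    (fun r Hr => dcont _ _ _ (Hg1 r Hr)) (fun r Hr => dcont _ _ _ (Hg2 r Hr))
    (fun r Hr => conj (Hinit1 r Hr) (Hinit2 r Hr))).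
  assert (Hfin : forall r, 0 < r -> 0 < g1 r /\ 0 < g2 r).
  { apply Hbar.
    - intros r Hr H1 H2. eexists; split; [|apply Hg1; exact Hr].
      assert (Hd : (N - 1) * Derive v r <= - de * r * v r * Rpower (v r) (1 - m)).
      { apply (dv_bound r (v r) (Rpower (v r) (m - 1)) (Rpower (v r) (1 - m)) (Derive v r) (Derive u r) N m de beta (r ^ (S (S k))));
          auto; try apply Rpower_pos; try (apply pow_lt; lra).
        all: exact H2. }
      apply (alg1 r (v r) (Rpower (v r) (1 - m)) (Rpower (v r) (-m)) (Derive v r) N m de W s); auto; try apply Rpower_pos.
      unfold g1, w_of in H1. replace (r ^ 2) with (r * r) in H1 by ring. lra.
    - intros r Hr H1 H2. eexists; split; [|apply Hg2; exact Hr].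
      assert (Hd : (N - 1) * Derive v r = - de * r * v r * Rpower (v r) (1 - m)).
      { apply (dv_eq r (v r) (Rpower (v r) (m - 1)) (Rpower (v r) (1 - m)) (Derive v r) (Derive u r) N m de beta (r ^ (S (S k))));
          auto; try apply Rpower_pos; try (apply pow_lt; lra).
        all: exact H1. }
      apply (alg2 r (v r) (Rpower (v r) (1 - m)) (Derive v r) N de W s beta alpha th (r ^ (S (S k)))); auto;
        try apply Rpower_pos; try (apply pow_lt; lra).
      unfold g1, w_of in H2. replace (r ^ 2) with (r * r) in H2 by ring. lra. }
  exists W. split; auto. intros r Hr. destruct (Hfin r ltac:(lra)) as [H _].
  unfold g1 in H. lra.
Qed.
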